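(* Let $\mathcal{X}$ be a sample space (e.g. $\mathbb{R}^d$), let $c:\mathcal{X}\times\mathcal{X}\to[0,\infty)$ be a cost function with $c(x,x)=0$ for all $x$, and let $\lambda>0$. Let $\mu,\mu_c,\nu$ be probability measures on $\mathcal{X}$, let $\epsilon\in[0,1)$ and set $\tilde\mu=(1-\epsilon)\mu+\epsilon\mu_c$. Then \[ \mathrm{ROBOT}(\tilde\mu,\nu)\le \min\Big\{\mathrm{OT}(\mu,\nu)+\lambda\,\epsilon\,\|\mu-\mu_c\|_{\mathrm{TV}},\ \ \lambda\|\tilde\mu-\nu\|_{\mathrm{TV}},\ \ \mathrm{OT}(\tilde\mu,\nu)\Big\}. \]
   Context: For probability measures $\mu,\nu$ on $\mathcal{X}$, $\mathrm{OT}(\mu,\nu)=\min_{\Pi}\mathbb{E}_{(X_1,X_2)\sim\Pi}[c(X_1,X_2)]$, the minimum over all couplings $\Pi$ of $\mu$ and $\nu$ (probability measures on $\mathcal{X}\times\mathcal{X}$ with marginals $\mu$ and $\nu$). For a signed measure $s$, the total-variation norm is $\|s\|_{\mathrm{TV}}=\int\frac12|s(\mathrm{d}x)|$. The robust optimal transport value is \[ \mathrm{ROBOT}(\mu,\nu)=\inf_{\pi,s}\ \iint c(x,y)\,\pi(\mathrm{d}x,\mathrm{d}y)+\lambda\|s\|_{\mathrm{TV}}, \] where the infimum is over signed measures $s$ on $\mathcal{X}$ with $\int s(\mathrm{d}x)=0$ and $\mu+s\ge 0$, and nonnegative measures $\pi$ on $\mathcal{X}\times\mathcal{X}$ whose first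 marginal is $\mu+s$ and whose second marginal is $\nu$. *)

(* Defs.v *)
From HB Require Import structures.
From mathcomp Require Import all_boot all_order all_algebra.
From mathcomp Require Import all_classical all_reals all_analysis.
Import Order.TTheory GRing.Theory Num.Theory.
Import numFieldNormedType.Exports.

Set Implicit Arguments.
Unset Strict Implicit.
Unset Printing Implicit Defensive.

Local Open Scope classical_set_scope.
Local Open Scope ring_scope.
Local Open Scope ereal_scope.

Section ROBOTDefs.
Context {d : measure_display} {X : measurableType d} {R : realType}.

Definition is_coupling (mu nu : set X -> \bar R)
    (pi : {measure set (X * X)%type -> \bar R}) : Prop :=
  (forall A, measurable A -> pi (A `*` [set: X]) = mu A) /\
  (forall B, measurable B -> pi ([set: X] `*` B) = nu B).

Definition OT (c : X * X -> R) (mu nu : set X -> \bar R) : \bar R :=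
  ereal_inf [set \int[pi]_z (c z)%:E | pi in is_coupling mu nu].

Definition TV (s : set X -> \bar R) : \bar R :=
  (2^-1)%:E * ereal_sup [set v | exists (n : nat) (A : 'I_n -> set X),
     (forall i, measurable (A i)) /\
     (forall i j, i != j -> A i `&` A j = set0) /\
     \bigcup_i A i = [set: X] /\
     v = \sum_(i < n) `| s (A i) |].

Definition ROBOT (c : X * X -> R) (lam : R) (mu nu : set X -> \bar R) : \bar R :=
  ereal_inf [set v | exists (pi : {measure set (X * X)%type -> \bar R})
                            (s : {charge set X -> \bar R}),
     s [set: X] = 0 /\
     (forall A, measurable A -> 0 <= mu A + s A) /\
     (forall A, measurable A -> pi (A `*` [set: X]) = mu A + s A) /\
     (forall B, measurable B -> pi ([set: X] `*` B) = nu B) /\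
     v = \int[pi]_z (c z)%:E + lam%:E * TV s].

End ROBOTDefs.

(* Main.v *)
Require Import Defs.
From HB Require Import structures.
From mathcomp Require Import all_boot all_order all_algebra.
From mathcomp Require Import all_classical all_reals all_analysis.
From mathcomp Require Import measurable_realfun.
From mathcomp Require Import ring lra.
Import Order.TTheory GRing.Theory Num.Theory.
Import numFieldNormedType.Exports.
Local Open Scope classical_set_scope.
Local Open Scope ring_scope.

Local Open Scope ereal_scope.
Section Helpers.
Context {d} {X : measurableType d} {R : realType}.

Definition diagf := fun x : X => (x, x).
Lemma mdiagf : measurable_fun [set: X] diagf.
Proof. exact: measurable_fun_pair. Qed.
Definition diag_meas (nu : {measure set X -> \bar R}) :
  {measure set (X*X)%type -> \bar R}.
refine (pushforward nu diagf). all: exact: mdiagf. Defined.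
Lemma diag_measE nu A : diag_meas nu A = nu (diagf @^-1` A). Proof. by []. Qed.
Lemma diag_int nu (c : X * X -> R) : measurable_fun setT c ->
  (forall x, c (x,x) = 0%R) -> (forall z, (0 <= c z)%R) ->
  \int[diag_meas nu]_z (c z)%:E = 0.
Proof.
move=> mc c0 cge0.
rewrite /diag_meas /=. rewrite ge0_integral_pushforward //=.
- by apply: integral0_eq => x _ /=; rewrite /diagf c0.
- exact: mdiagf.
- exact/measurable_EFinP.
- by move=> y _; rewrite lee_fin.
Qed.

Lemma probE (P : probability X R) A : measurable A -> exists a : R, P A = a%:E.
Proof. by move=> mA; exists (fine (P A)); rewrite fineK // fin_num_measure. Qed.

Lemma TV_le (s t : set X -> \bar R) (k : R) : (0 <= k)%R ->
  (forall A, measurable A -> `|s A| = k%:E * `|t A|) -> TV s <= k%:E * TV t.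
Proof.
move=> k0 H; rewrite /TV muleCA; apply: lee_wpmul2l; first by rewrite lee_fin.
apply: ge_ereal_sup => v [n [A [mA [dA [cA ->]]]]].
under eq_bigr do rewrite H //.
rewrite -ge0_sume_distrr //; apply: lee_wpmul2l; first by rewrite lee_fin.
by apply: ereal_sup_ubound; exists n, A.
Qed.

Lemma TV_ge0 (s : set X -> \bar R) : 0 <= TV s.
Proof.
rewrite /TV; apply: mule_ge0; first by rewrite lee_fin.
apply: (le_trans _ (ereal_sup_ubound _)); last first.
  exists 1%N, (fun=> setT); split => //; split.
    by move=> i j; rewrite !ord1 eqxx.
  by split; [apply/seteqP; split => x //= _; exists ord0|reflexivity].
by rewrite big_ord1.
Qed.

Lemma inf_addK (S : set (\bar R)) (K y : \bar R) : (forall x, S x -> 0 <= x) ->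
  0 <= K -> (forall x, S x -> y <= x + K) -> y <= ereal_inf S + K.
Proof.
move=> S0; case: K => [r| |] // K0 H.
- rewrite -leeBlDr //; apply: le_ereal_inf_tmp => x Sx.
  by rewrite leeBlDr //; exact: H.
- have h : 0 <= ereal_inf S by apply: le_ereal_inf_tmp.
  by rewrite addey ?leey //; case: (ereal_inf S) h.
Qed.
End Helpers.

Theorem theorem1 (d : measure_display) (X : measurableType d) (R : realType)
  (c : X * X -> R) (lam eps : R)
  (mu mu_c nu : probability X R)
  (c_meas : measurable_fun [set: X * X] c)
  (c_ge0 : forall z, (0 <= c z)%R)
  (c_diag : forall x, c (x, x) = 0%R)
  (lam_gt0 : (0 < lam)%R)
  (eps_ge0 : (0 <= eps)%R) (eps_lt1 : (eps < 1)%R) :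
  let mu_t : set X -> \bar R :=
    fun A => (1 - eps)%:E * mu A + eps%:E * mu_c A in
  ROBOT c lam mu_t nu <=
    Order.min (OT c mu nu + lam%:E * eps%:E * TV (fun A => mu A - mu_c A))
      (Order.min (lam%:E * TV (fun A => mu_t A - nu A))
                 (OT c mu_t nu)).
Proof.
cbv zeta.
set mu_t := (fun A : set X => (1 - eps)%:E * mu A + eps%:E * mu_c A).
have lam0 : (0 <= lam%:E) by rewrite lee_fin ltW.
rewrite !le_min; apply/andP; split; [|apply/andP; split].
-
  pose s1 : {charge set X -> \bar R} := cadd (cscale eps (charge_of_finite_measure mu))
                  (cscale (- eps) (charge_of_finite_measure mu_c)).
  rewrite /OT; apply: inf_addK.
  + by move=> _ [pi _ <-]; apply: integral_ge0 => z _; rewrite lee_fin.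
  + by apply: mule_ge0; [apply: mule_ge0 => //; rewrite lee_fin|exact: TV_ge0].
  move=> _ [pi [pi1 pi2] <-].
  apply: (le_trans (ereal_inf_lbound _)).
    exists pi, s1; split.
      rewrite /s1 /= /cadd /= /cscale /= !probability_setT !mule1 -EFinD.
      by congr EFin; ring.
    have e1 A : measurable A -> mu_t A + s1 A = mu A.
      move=> mA; rewrite /mu_t /s1 /= /cadd /= /cscale /=.
      have [a ->] := probE mu _ mA; have [b ->] := probE mu_c _ mA.
      by rewrite -!EFinM -!EFinD; congr EFin; ring.
    split; first by move=> A mA; rewrite e1.
    split; first by move=> A mA; rewrite e1 // pi1.
    by split; [exact: pi2|reflexivity].
  rewrite leeD2l // -muleA; apply: lee_wpmul2l => //.
  apply: TV_le => // A mA; rewrite /s1 /= /cadd /= /cscale /=.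
  have [a ->] := probE mu _ mA; have [b ->] := probE mu_c _ mA.
  rewrite -!EFinM -!EFinD abse_EFin; congr EFin.
  have -> : (eps * a + - eps * b = eps * (a - b))%R by ring.
  by rewrite normrM ger0_norm.
-
  pose s2 : {charge set X -> \bar R} := cadd (charge_of_finite_measure nu)
    (cadd (cscale (- (1 - eps)) (charge_of_finite_measure mu))
          (cscale (- eps) (charge_of_finite_measure mu_c))).
  have e2 A : measurable A -> mu_t A + s2 A = nu A.
    move=> mA; rewrite /mu_t /s2 /= /cadd /= /cadd /= /cscale /=.
    have [a ->] := probE mu _ mA; have [b ->] := probE mu_c _ mA.
    have [e ->] := probE nu _ mA.
    by rewrite -!EFinM -!EFinD; congr EFin; ring.
  apply: (le_trans (ereal_inf_lbound _)).
    exists (diag_meas nu), s2; split.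
      rewrite /s2 /= /cadd /= /cadd /= /cscale /= !probability_setT !mule1 -!EFinD.
      by congr EFin; ring.
    split; first by move=> A mA; rewrite e2.
    split.
      move=> A mA; rewrite e2 // diag_measE; congr (nu _).
      by apply/seteqP; split => x /=; [case|].
    split; last reflexivity.
    move=> B mB; rewrite diag_measE; congr (nu _).
    by apply/seteqP; split => x /=; [case|].
  rewrite diag_int // add0e; apply: lee_wpmul2l => //.
  rewrite -[Z in _ <= Z]mul1e; apply: TV_le => // A mA.
  rewrite mul1e /mu_t /s2 /= /cadd /= /cadd /= /cscale /=.
  have [a ->] := probE mu _ mA; have [b ->] := probE mu_c _ mA.
  have [e ->] := probE nu _ mA.
  rewrite -!EFinM -!EFinD !abse_EFin; congr EFin.
  rewrite -normrN; congr Num.norm; ring.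
-
  apply: le_ereal_inf_tmp => _ [pi [pi1 pi2] <-].
  apply: (le_trans (ereal_inf_lbound _)).
    exists pi, (czero : {charge set X -> \bar R}); split => //.
    split.
      move=> A mA; rewrite adde0; apply: adde_ge0; apply: mule_ge0 => //;
        by rewrite lee_fin ?subr_ge0 ?ltW.
    split; first by move=> A mA; rewrite adde0 pi1.
    by split; [exact: pi2|reflexivity].
  apply: geeDl; apply: mule_ge0_le0 => //.
  apply: (le_trans (@TV_le _ X R (@czero _ X R) (@czero _ X R) 0%R (lexx _) _)).
    by move=> A _; rewrite mul0e /= normr0.
  by rewrite mul0e.
Qed.
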